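(* Let $A$ be a finite skew brace such that $\Lambda(A)$ has exactly one vertex. Then $A^3=\{0\}$ (so $A$ is left nilpotent of class two), $\operatorname{Fix}(A)$ is an ideal of index $2$ in $A$, and $A^2=\operatorname{Fix}(A)$.
   Context: A skew brace is a triple $(A,+,\circ)$ where $(A,+)$ and $(A,\circ)$ are groups with $a\circ(b+c)=a\circ b-a+a\circ c$. $\lambda_a(b)=-a+a\circ b$, $a*b=\lambda_a(b)-b$; for subsets $X,Y$, $X*Y$ is the additive subgroup generated by all $x*y$; $A^1=A$, $A^{n+1}=A*A^n$. $\operatorname{Fix}(A)=\{a\in A:\lambda_x(a)=a\ \forall x\in A\}$. An ideal is a subset $I$ that is a normal subgroup of both $(A,+)$ and $(A,\circ)$ with $\lambda_a(I)\subseteq I$ for all $a$. $\Lambda(A)$ is the graph whose vertices are the $\lambda$-orbits of size $>1$, two distinct vertices $L_1,L_2$ adjacent iff $\gcd(|L_1|,|L_2|)\ne1$. *)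

(* Defs.v *)
From mathcomp Require Import all_boot.
Set Implicit Arguments. Unset Strict Implicit. Unset Printing Implicit Defensive.

Record skew_brace (T : finType) := SkewBrace {
  add : T -> T -> T; opp : T -> T; zero : T;
  circ : T -> T -> T; cinv : T -> T; one : T;
  addA : forall a b c, add a (add b c) = add (add a b) c;
  add0r : forall a, add zero a = a;
  addr0 : forall a, add a zero = a;
  addNr : forall a, add (opp a) a = zero;
  addrN : forall a, add a (opp a) = zero;
  circA : forall a b c, circ a (circ b c) = circ (circ a b) c;
  circ1r : forall a, circ one a = a;
  circr1 : forall a, circ a one = a;
  circVr : forall a, circ (cinv a) a = one;
  circrV : forall a, circ a (cinv a) = one;
  brace_compat : forall a b c,
    circ a (add b c) = add (add (circ a b) (opp a)) (circ a c)
}.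

Section SkewBraceDefs.
Variables (T : finType) (A : skew_brace T).

Local Notation "x + y" := (add A x y).
Local Notation "- x" := (opp A x).

Definition lam (a b : T) : T := - a + circ A a b.
Definition star (a b : T) : T := lam a b + - b.

Definition is_add_subgroup (S : {set T}) : bool :=
  [&& zero A \in S, [forall x in S, forall y in S, x + y \in S]
    & [forall x in S, - x \in S]].

Definition add_gen (X : {set T}) : {set T} :=
  [set x | [forall S : {set T}, (is_add_subgroup S && (X \subset S)) ==> (x \in S)]].

Definition starS (X Y : {set T}) : {set T} :=
  add_gen [set star x y | x in X, y in Y].

(* A^1 = A, A^(n+1) = A * A^n  (A^0 is set to A as well, unused) *)
Fixpoint Apow (n : nat) : {set T} :=
  match n with
  | 0 => setT
  | 1 => setT
  | m.+1 => starS setT (Apow m)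
  end.

Definition Fix : {set T} := [set a | [forall x, lam x a == a]].

Definition is_circ_subgroup (S : {set T}) : bool :=
  [&& one A \in S, [forall x in S, forall y in S, circ A x y \in S]
    & [forall x in S, cinv A x \in S]].

Definition is_ideal (I : {set T}) : bool :=
  [&& is_add_subgroup I,
      [forall a, forall x in I, a + x + - a \in I],
      is_circ_subgroup I,
      [forall a, forall x in I, circ A (circ A a x) (cinv A a) \in I]
    & [forall a, forall x in I, lam a x \in I]].

Definition lam_orbit (b : T) : {set T} := [set lam a b | a in [set: T]].

Definition Lambda_vertices : {set {set T}} :=
  [set L in [set lam_orbit b | b in [set: T]] | 1 < #|L|].

Definition Lambda_adj (L1 L2 : {set T}) : bool :=
  [&& L1 \in Lambda_vertices, L2 \in Lambda_vertices, L1 != L2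
    & gcdn #|L1| #|L2| != 1].

End SkewBraceDefs.

(* Main.v *)
Require Import Defs.
From mathcomp Require Import all_boot.
Set Implicit Arguments. Unset Strict Implicit. Unset Printing Implicit Defensive.

Section Brace.
Variables (T : finType) (A : skew_brace T).
Local Notation ad := (add A).
Local Notation op := (opp A).
Local Notation ci := (circ A).
Local Notation z := (zero A).
Local Notation lm := (lam A).
Local Notation F := (Fix A).

Lemma addKl a b : ad (op a) (ad a b) = b.
Proof. by rewrite addA addNr add0r. Qed.
Lemma addNKl a b : ad a (ad (op a) b) = b.
Proof. by rewrite addA addrN add0r. Qed.
Lemma addrK a b : ad (ad b a) (op a) = b.
Proof. by rewrite -addA addrN addr0. Qed.
Lemma addrNK a b : ad (ad b (op a)) a = b.
Proof. by rewrite -addA addNr addr0. Qed.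
Lemma addlI a b c : ad a b = ad a c -> b = c.
Proof. by move=> H; rewrite -(addKl a b) H addKl. Qed.
Lemma addIr a b c : ad b a = ad c a -> b = c.
Proof. by move=> H; rewrite -(addrK a b) H addrK. Qed.
Lemma oppK a : op (op a) = a.
Proof. by apply: (@addlI (op a)); rewrite addrN addNr. Qed.
Lemma opp0 : op z = z.
Proof. by rewrite -{2}(addNr A z) addr0. Qed.
Lemma oppD a b : op (ad a b) = ad (op b) (op a).
Proof.
apply: (@addlI (ad a b)); rewrite addrN -addA (addA A b) addrN add0r addrN //.
Qed.
Lemma one_zero : Defs.one A = z.
Proof.
have := brace_compat A (Defs.one A) z z.
rewrite !add0r !circ1r addr0 => H.
have : op (Defs.one A) = z by apply: (@addlI z); rewrite -H addr0.
by move=> H2; rewrite -(oppK (Defs.one A)) H2 opp0.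
Qed.
Lemma circ0 a : ci a z = a.
Proof.
have := brace_compat A a z z; rewrite add0r => H.
have H2 : ad (ci a z) z = ad (ci a z) (ad (op a) (ci a z)) by rewrite addr0 addA -H.
by have := addlI H2 => /(congr1 (ad a)); rewrite addNKl addr0.
Qed.
Lemma circE a b : ci a b = ad a (lm a b).
Proof. by rewrite /lam addNKl. Qed.
Lemma lamD x b c : lm x (ad b c) = ad (lm x b) (lm x c).
Proof. by rewrite /lam brace_compat !addA. Qed.
Lemma lam0 x : lm x z = z.
Proof. by rewrite /lam circ0 addNr. Qed.
Lemma lamN x b : lm x (op b) = op (lm x b).
Proof.
apply: (@addlI (lm x b)); rewrite -lamD !addrN lam0 //.
Qed.
Lemma lam1 b : lm z b = b.
Proof. by rewrite /lam -one_zero circ1r one_zero opp0 add0r. Qed.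
Lemma lamM x y b : lm (ci x y) b = lm x (lm y b).
Proof.
rewrite /lam -circA (circE y b) brace_compat -(addA A (ci x y)) addKl addKl //.
Qed.
Lemma lamV x b : lm (cinv A x) (lm x b) = b.
Proof. by rewrite -lamM circVr one_zero lam1. Qed.
Lemma lamI x : injective (lm x).
Proof. by move=> b c H; rewrite -(lamV x b) H lamV. Qed.
Lemma circI x : injective (ci x).
Proof. by move=> b c H; rewrite -(circ1r A b) -(circVr A x) -circA H circA circVr circ1r. Qed.


Lemma FixP a : reflect (forall x, lm x a = a) (a \in F).
Proof.
rewrite inE; apply: (iffP forallP) => H x; first by apply/eqP.
by apply/eqP.
Qed.
Lemma Fix0 : z \in F.
Proof. by apply/FixP => x; rewrite lam0. Qed.
Lemma FixD a b : a \in F -> b \in F -> ad a b \in F.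
Proof. by move=> /FixP Ha /FixP Hb; apply/FixP => x; rewrite lamD Ha Hb. Qed.
Lemma FixN a : a \in F -> op a \in F.
Proof. by move=> /FixP Ha; apply/FixP => x; rewrite lamN Ha. Qed.
Lemma Fix_sub : is_add_subgroup A F.
Proof.
apply/and3P; split; first exact: Fix0.
  by apply/forallP => x; apply/implyP => Hx; apply/forallP => y; apply/implyP => Hy; apply: FixD.
by apply/forallP => x; apply/implyP; apply: FixN.
Qed.
Lemma lam_notFix x b : b \notin F -> lm x b \notin F.
Proof.
move=> Hb; apply/negP => /FixP H; move/negP: Hb; apply; apply/FixP => y.
by rewrite -(lamV x b) H.
Qed.

Lemma orb_self b : b \in lam_orbit A b.
Proof. by apply/imsetP; exists z; rewrite ?inE ?lam1. Qed.
Lemma orb_mem x b : lm x b \in lam_orbit A b.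
Proof. by apply/imsetP; exists x; rewrite ?inE. Qed.
Lemma orbitE c b : c \in lam_orbit A b -> lam_orbit A c = lam_orbit A b.
Proof.
case/imsetP => y _ ->; apply/setP => w; apply/imsetP/imsetP => [[x _ ->]|[x _ ->]].
  by exists (ci x y); rewrite ?inE // lamM.
exists (ci x (cinv A y)); first by rewrite inE.
by rewrite lamM lamV.
Qed.
Lemma Fix_orbit b : b \in F -> lam_orbit A b = [set b].
Proof.
move/FixP => H; apply/setP => w; rewrite inE; apply/imsetP/eqP => [[x _ ->]|->] //.
by exists z; rewrite ?inE ?lam1.
Qed.
Lemma notFix_orbit b : b \notin F -> 1 < #|lam_orbit A b|.
Proof.
move=> Hb; apply/card_gt1P.
have [x Hx] : exists x, lm x b != b.
  apply/existsP; move: Hb; rewrite inE negb_forall //.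
by exists (lm x b), b; split => //; [apply: orb_mem | apply: orb_self].
Qed.

Lemma orbit_dvd b : #|lam_orbit A b| %| #|T|.
Proof.
set O := lam_orbit A b.
set S := [set x | lm x b == b].
have Hf : forall c, c \in O -> #|[set x | lm x b == c]| = #|S|.
  move=> c /imsetP [y _ ->].
  have -> : [set x | lm x b == lm y b] = [set ci y x | x in S].
    apply/setP => w; rewrite inE; apply/eqP/imsetP => [H|[x Hx ->]].
      exists (ci (cinv A y) w); first by rewrite inE lamM H lamV.
      by rewrite circA circrV circ1r.
    by rewrite lamM (eqP (_ : lm x b == b)) //; move: Hx; rewrite inE.
  by rewrite card_imset //; apply: circI.
have -> : #|T| = \sum_(x : T) 1 by rewrite sum1_card.
rewrite (partition_big (fun x => lm x b) (mem O)); last by move=> x _; apply: orb_mem.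
rewrite (eq_bigr (fun _ => #|S|)); last first.
  move=> c Hc; rewrite -(Hf c Hc) -sum1_card; apply: eq_bigl => x; rewrite inE //.
by rewrite sum_nat_const dvdn_mulr.
Qed.

End Brace.

Section Main.
Variables (T : finType) (A : skew_brace T).
Local Notation ad := (add A).
Local Notation op := (opp A).
Local Notation ci := (circ A).
Local Notation z := (zero A).
Local Notation lm := (lam A).
Local Notation F := (Fix A).

Lemma mem_add_gen x (X : {set T}) : x \in X -> x \in add_gen A X.
Proof.
move=> Hx; rewrite inE; apply/forallP => S; apply/implyP => /andP [_ HS].
exact: (subsetP HS).
Qed.
Lemma add_gen_sub (S X : {set T}) : is_add_subgroup A S -> X \subset S -> add_gen A X \subset S.
Proof.
move=> HS HX; apply/subsetP => x; rewrite inE => /forallP /(_ S).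
by rewrite HS HX => /implyP; apply.
Qed.
Lemma zero_add_gen (X : {set T}) : z \in add_gen A X.
Proof.
rewrite inE; apply/forallP => S; apply/implyP => /andP [/and3P [] // _ _].
Qed.

Lemma cinvF x : x \in F -> cinv A x = op x.
Proof.
move=> /FixP Hx; apply: (@addIr _ A x); rewrite addNr.
by have := circVr A x; rewrite circE Hx one_zero.
Qed.
Lemma lam_inv a : lm a (cinv A a) = op a.
Proof.
apply: (@addlI _ A a); rewrite addrN -circE circrV one_zero //.
Qed.

Variables (L : {set T}) (HL : Lambda_vertices A = [set L]).

Lemma L_vert : L \in Lambda_vertices A.
Proof. by rewrite HL set11. Qed.

Lemma LF a : (a \in L) = (a \notin F).
Proof.
apply/idP/idP => [Ha|Ha].
  have := L_vert; rewrite inE => /andP [/imsetP [b0 _ EL] HLc].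
  have Eo : lam_orbit A a = L by rewrite EL; apply: orbitE; rewrite -EL.
  apply/negP => Hf; move: HLc; rewrite -Eo Fix_orbit // cards1 //.
have : lam_orbit A a \in Lambda_vertices A.
  by rewrite inE notFix_orbit // andbT; apply/imsetP; exists a.
by rewrite HL inE => /eqP <-; apply: orb_self.
Qed.

Lemma exb0 : exists2 b0, b0 \notin F & L = lam_orbit A b0.
Proof.
have := L_vert; rewrite inE => /andP [/imsetP [b0 _ EL] _].
by exists b0 => //; rewrite -LF EL orb_self.
Qed.

Lemma LC : L = ~: F.
Proof. by apply/setP => a; rewrite LF in_setC. Qed.

Lemma cardLF : #|L| = #|F|.
Proof.
have [b0 Hb0 EL] := exb0.
have H1 : #|F| <= #|L|.
  rewrite -(card_imset F (@addlI _ A b0)); apply: subset_leq_card.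
  apply/subsetP => y /imsetP [x Hx ->]; rewrite LF; apply/negP => H.
  by move/negP: Hb0; apply; rewrite -(addrK A x b0); apply: FixD => //; apply: FixN.
have H2 : #|L| %| #|F|.
  by rewrite -(dvdn_addl _ (dvdnn #|L|)) {2}LC cardsC EL orbit_dvd.
apply/eqP; rewrite eqn_leq H1 andbT; apply: dvdn_leq => //.
by apply/card_gt0P; exists z; apply: Fix0.
Qed.

Lemma cardT : #|T| = (2 * #|F|)%N.
Proof. by rewrite -(cardsC F) -LC cardLF mul2n addnn. Qed.

Lemma index2l a b : a \notin F -> b \notin F -> ad (op a) b \in F.
Proof.
move=> Ha Hb.
have E : [set ad a x | x in F] = ~: F.
  apply/eqP; rewrite eqEcard card_imset; last exact: addlI.
  rewrite -LC cardLF leqnn andbT; apply/subsetP => y /imsetP [x Hx ->].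
  rewrite ?LF ?in_setC; apply/negP => H; move/negP: Ha; apply.
  by rewrite -(addrK A x a); apply: FixD => //; apply: FixN.
have : b \in ~: F by rewrite inE.
by rewrite -E => /imsetP [x Hx ->]; rewrite addKl.
Qed.

Lemma index2r a b : a \notin F -> b \notin F -> ad b (op a) \in F.
Proof.
move=> Ha Hb.
have E : [set ad x a | x in F] = ~: F.
  apply/eqP; rewrite eqEcard card_imset; last exact: addIr.
  rewrite -LC cardLF leqnn andbT; apply/subsetP => y /imsetP [x Hx ->].
  rewrite ?LF ?in_setC; apply/negP => H; move/negP: Ha; apply.
  by rewrite -(addKl A x a); apply: FixD => //; apply: FixN.
have : b \in ~: F by rewrite inE.
by rewrite -E => /imsetP [x Hx ->]; rewrite addrK.
Qed.

Lemma starF x b : star A x b \in F.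
Proof.
rewrite /star; case: (boolP (b \in F)) => Hb.
  by rewrite (FixP _ _ Hb) addrN Fix0.
by apply: index2r => //; apply: lam_notFix.
Qed.
Lemma starlF x b : ad (op b) (lm x b) \in F.
Proof.
case: (boolP (b \in F)) => Hb.
  by rewrite (FixP _ _ Hb) addNr Fix0.
by apply: index2l => //; apply: lam_notFix.
Qed.

Lemma normF a x : x \in F -> ad (ad a x) (op a) \in F.
Proof.
move=> Hx; case: (boolP (a \in F)) => Ha.
  by apply: FixD; [apply: FixD | apply: FixN].
apply: index2r => //; apply/negP => H; move/negP: Ha; apply.
by rewrite -(addrK A x a); apply: FixD => //; apply: FixN.
Qed.

Lemma idealF : is_ideal A F.
Proof.
apply/and5P; split.
- exact: Fix_sub.
- by apply/forallP => a; apply/forallP => x; apply/implyP; apply: normF.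
- apply/and3P; split; first by rewrite one_zero Fix0.
    apply/forallP => x; apply/implyP => Hx; apply/forallP => y; apply/implyP => Hy.
    by rewrite circE (FixP _ _ Hy); apply: FixD.
  by apply/forallP => x; apply/implyP => Hx; rewrite cinvF //; apply: FixN.
- apply/forallP => a; apply/forallP => x; apply/implyP => Hx.
  have [f1 Hf E1] : exists2 f1, f1 \in F & lm x (cinv A a) = ad (cinv A a) f1.
    by exists (ad (op (cinv A a)) (lm x (cinv A a))); [apply: starlF | rewrite addNKl].
  rewrite -circA circE (circE A x) lamD (FixP _ _ Hx) E1 lamD lam_inv (FixP _ _ Hf).
  by rewrite !addA; apply: FixD => //; apply: normF.
- apply/forallP => a; apply/forallP => x; apply/implyP => Hx. by rewrite (FixP _ _ Hx).
Qed.

Lemma A2 : starS A setT setT = F.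
Proof.
apply/eqP; rewrite eqEsubset; apply/andP; split.
  apply: add_gen_sub; first exact: Fix_sub.
  by apply/subsetP => y /imset2P [x b _ _ ->]; apply: starF.
apply/subsetP => g Hg; apply: mem_add_gen.
have [b0 Hb0 EL] := exb0.
set f := ad (ad (op b0) g) b0.
have Hf : f \in F by rewrite /f -{2}(oppK A b0); apply: normF.
have : ad b0 f \in L.
  rewrite LF; apply/negP => H; move/negP: Hb0; apply.
  by rewrite -(addrK A f b0); apply: FixD => //; apply: FixN.
rewrite EL => /imsetP [x _ Ex].
apply/imset2P; exists x b0; rewrite ?inE //.
by rewrite /star -Ex /f addA addNKl addrK.
Qed.

End Main.

Theorem mainTheorem12 (T : finType) (A : skew_brace T) :
  #|Lambda_vertices A| = 1 ->
  [/\ Apow A 3 = [set zero A],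
      is_ideal A (Fix A),
      #|T| = (2 * #|Fix A|)%N
    & Apow A 2 = Fix A].
Proof.
move=> H1; have /cards1P [L HL] : #|Lambda_vertices A| == 1 by rewrite H1.
have E2 : Apow A 2 = Fix A by apply: (A2 HL).
split; [| exact: (idealF HL) | exact: (cardT HL) | exact: E2].
change (starS A setT (Apow A 2) = [set zero A]); rewrite E2.
apply/eqP; rewrite eqEsubset; apply/andP; split.
  apply: add_gen_sub.
    apply/and3P; split; first by rewrite set11.
      apply/forallP => x; apply/implyP; rewrite inE => /eqP ->.
      apply/forallP => y; apply/implyP; rewrite inE => /eqP ->.
      by rewrite add0r set11.
    by apply/forallP => x; apply/implyP; rewrite inE => /eqP ->; rewrite opp0 set11.
  apply/subsetP => y /imset2P [x b _ Hb ->].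
  by rewrite inE /star (FixP _ _ Hb) addrN.
by apply/subsetP => y; rewrite inE => /eqP ->; apply: zero_add_gen.
Qed.
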